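(* Let $\lambda>0$, $d_v>0$, $m=\lambda\pi d_v^2$, and suppose $\epsilon\ge d_v$. Then the range-vector localizability probability equals the localizability probability based on the number of visible landmarks: $$\mathbb P\big[\Delta_p(\mathbf R_{\mathbf 0},\mathbf R_{\mathbf x})>\epsilon\big]=\mathbb P[N_{\mathbf 0}\neq N_{\mathbf x}]=1-e^{-2m}I_0(2m).$$
   Context: Following the paper's model, the landmarks seen from the origin $\mathbf 0$ and those seen from a second location $\mathbf x\in\mathbb R^2$ are given by two independent homogeneous Poisson point processes $\Phi_{\mathbf 0}$ and $\Phi_{\mathbf x}$ on $\mathbb R^2$ of intensity $\lambda$. A landmark is visible from a location if its Euclidean distance to that location is at most $d_v$. $N_{\mathbf 0}$ (resp. $N_{\mathbf x}$) is the number of visible landmarks of $\Phi_{\mathbf 0}$ from $\mathbf 0$ (resp. of $\Phi_{\mathbf x}$ from $\mathbf x$). The range vector $\mathbf R_{\mathbf 0}\in\mathbb R^{N_{\mathbf 0}}$ lists the distances from $\mathbf 0$ to its visible landmarks ordered clockwise by bearing from a fixed reference direction; $\mathbf R_{\mathbf x}\in\mathbb R^{N_{\mathbf x}}$ is defined likewise relative to $\mathbf x$. For real vectors, $\Delta_p(\mathbf u,\mathbf v)=\|\mathbf u-\mathbf v\|_\infty$ if $\dim\mathbf u=\dim\mathbf v$ (equal to $0$ when both are empty) and $\infty$ otherwise. $I_0$ is the modified Bessel function of the first kind of order zero. *)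

(* Defs.v *)
From HB Require Import structures.
From mathcomp Require Import all_boot all_order all_algebra.
From mathcomp Require Import all_classical all_reals all_analysis.
From mathcomp Require Import finmap.
Set Implicit Arguments. Unset Strict Implicit. Unset Printing Implicit Defensive.
Import Order.TTheory GRing.Theory Num.Theory.
Import numFieldNormedType.Exports.
Local Open Scope classical_set_scope.
Local Open Scope ring_scope.

Section landmarks.
Context {R : realType}.

Definition pt := (R * R)%type.

Definition edist (p q : pt) : R :=
  Num.sqrt ((p.1 - q.1) ^+ 2 + (p.2 - q.2) ^+ 2).

Definition bounded2 (B : set pt) : Prop :=
  exists r : R, B `<=` [set p | `|p.1| <= r /\ `|p.2| <= r].

Definition count_in (A B : set pt) : nat := #|` fset_set (A `&` B)|%fset.

Definition leb2 := (@lebesgue_measure R \x @lebesgue_measure R)%E.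

Definition poisson_mass (r : R) (k : nat) : R := r ^+ k / k`!%:R * expR (- r).

Definition count_event {d} {T : measurableType d} (Phi : T -> set pt)
  (n : nat) (B : 'I_n -> set pt) (k : 'I_n -> nat) : set T :=
  \bigcap_(i in [set: 'I_n]) [set w | count_in (Phi w) (B i) = k i].

Definition homogeneous_PPP {d} {T : measurableType d} (P : probability T R)
  (lam : R) (Phi : T -> set pt) : Prop :=
  (forall w B, bounded2 B -> finite_set (Phi w `&` B)) /\
  (forall B (k : nat), measurable B -> bounded2 B ->
     measurable [set w | count_in (Phi w) B = k]) /\
  (forall (n : nat) (B : 'I_n -> set pt) (k : 'I_n -> nat),
     (forall i, measurable (B i) /\ bounded2 (B i)) ->
     (forall i j, i != j -> B i `&` B j = set0) ->
     P (count_event Phi B k) =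
       (\prod_(i < n) poisson_mass (lam * fine (leb2 (B i))) (k i))%:E).

(* two point processes are independent: the sigma-algebras generated by
   their counting variables on bounded Borel sets are independent *)
Definition independent_pp {d} {T : measurableType d} (P : probability T R)
  (Phi Psi : T -> set pt) : Prop :=
  forall (n m : nat) (B : 'I_n -> set pt) (k : 'I_n -> nat)
         (C : 'I_m -> set pt) (l : 'I_m -> nat),
    (forall i, measurable (B i) /\ bounded2 (B i)) ->
    (forall j, measurable (C j) /\ bounded2 (C j)) ->
    P (count_event Phi B k `&` count_event Psi C l) =
      (P (count_event Phi B k) * P (count_event Psi C l))%E.

Definition vis_disk (c : pt) (dv : R) : set pt := [set p | edist c p <= dv].

Definition nvis (A : set pt) (c : pt) (dv : R) : nat := count_in A (vis_disk c dv).

(* bearing of p seen from c, measured clockwise from the reference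
   direction (positive first axis), in [0, 2pi) *)
Definition bearing (c p : pt) : R :=
  let u := p.1 - c.1 in let v := p.2 - c.2 in
  if v <= 0 then acos (u / edist c p) else 2 * pi - acos (u / edist c p).

(* clockwise order by bearing (ties, impossible for distinct points off c,
   broken by distance) *)
Definition cw_le (c : pt) (p q : pt) : bool :=
  (bearing c p < bearing c q) ||
  ((bearing c p == bearing c q) && (edist c p <= edist c q)).

Definition range_vec (A : set pt) (c : pt) (dv : R) : seq R :=
  map (edist c) (sort (cw_le c) (enum_fset (fset_set (A `&` vis_disk c dv)))).

Definition Delta_p (u v : seq R) : \bar R :=
  if size u == size v then
    (\big[Num.max/0]_(ab <- zip u v) `|ab.1 - ab.2|)%:E
  else +oo%E.

Definition besselI0 (x : R) : R :=
  limn (series (fun k : nat => (x / 2) ^+ (2 * k) / (k`!%:R) ^+ 2)).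

End landmarks.

(* Main.v *)
Require Import Defs.
From HB Require Import structures.
From mathcomp Require Import all_boot all_order all_algebra.
From mathcomp Require Import all_classical all_reals all_analysis.
From mathcomp Require Import finmap.
From mathcomp Require Import ring lra.
Import Order.TTheory GRing.Theory Num.Theory.
Import numFieldNormedType.Exports.
Local Open Scope classical_set_scope.
Local Open Scope ring_scope.


Lemma int_cos2 (R : realType) (k : R) :
  (\int[@lebesgue_measure R]_(x in [set` `[(-(pi/2)) : R, pi/2]%R]) (k * cos x ^+ 2)%:E = (k * (pi/2))%:E)%E.
Proof.
pose F : R -> R := ((@id R) + sin * cos) * cst (k / 2).
have dF (x : R) : is_derive x (1:R) F (k * cos x ^+ 2).
  apply: is_derive_eq.
  rewrite scaler0 add0r /cst /GRing.scale /=.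
  rewrite mulrN -!expr2 sin2cos2; by field.
have cF (x : R) : {for x, continuous F}.
  apply: differentiable_continuous; apply/derivable1_diffP.
  by case: (dF x).
have pi2 : (0 < pi / 2 :> R) by rewrite divr_gt0 // pi_gt0.
rewrite (@continuous_FTC2 _ _ F).
- rewrite /F /cst !fctE /= sinN cosN cos_pihalf -EFinD; congr (_%:E); by field.
- lra.
- apply: continuous_subspaceT => x.
  exact: (continuousM (@cst_continuous _ _ k x) (continuousM (@continuous_cos R x) (@continuous_cos R x))).
- split.
  + by move=> x _; case: (dF x).
  + exact: cvg_at_right_filter (cF _).
  + exact: cvg_at_left_filter (cF _).
- by move=> x _; rewrite derive1E; have := dF x; case.
Qed.

Lemma int_semicircle (R : realType) (c dv : R) : 0 < dv ->
  (\int[@lebesgue_measure R]_(x in [set` `[c - dv, c + dv]%R])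
      (2 * Num.sqrt (dv ^+ 2 - (x - c) ^+ 2))%:E = (pi * dv ^+ 2)%:E)%E.
Proof.
move=> dv0.
pose F : R -> R := cst c + cst dv * sin.
pose G : R -> R := fun x => 2 * Num.sqrt (dv ^+ 2 - (x - c) ^+ 2).
have dF (x : R) : is_derive x (1:R) F (dv * cos x).
  apply: is_derive_eq.
  by rewrite /cst /GRing.scale /= add0r mulr0 addr0.
have F'E : F^`()%classic = fun x => dv * cos x.
  by apply/funext => x; rewrite derive1E; have := dF x; case.
have cF (x : R) : {for x, continuous F}.
  apply: differentiable_continuous; apply/derivable1_diffP.
  by case: (dF x).
have cF' (x : R) : {for x, continuous (F^`()%classic)}.
  rewrite F'E; apply: continuousM; first exact: cst_continuous.
  exact: continuous_cos.
have pi2 : (0 < pi / 2 :> R) by rewrite divr_gt0 // pi_gt0.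
have Fa : F (- (pi / 2)) = c - dv by rewrite /F !fctE /cst sinN sin_pihalf mulrN1.
have Fb : F (pi / 2) = c + dv by rewrite /F !fctE /cst sin_pihalf mulr1.
have := @integration_by_substitution_increasing R F G (- (pi / 2)) (pi / 2).
rewrite Fa Fb => ->.
- rewrite (_ : pi * dv ^+ 2 = 2 * dv ^+ 2 * (pi / 2)); last by field.
  rewrite -int_cos2; apply: eq_integral => x.
  rewrite in_setE /= in_itv /= => xab.
  rewrite F'E /G /F !fctE /cst.
  have cx := cos_ge0_pihalf xab.
  congr (_%:E).
  have -> : dv ^+ 2 - (c + dv * sin x - c) ^+ 2 = (dv * cos x) ^+ 2.
    rewrite (_ : c + dv * sin x - c = dv * sin x); last by ring.
    rewrite !exprMn sin2cos2; ring.
  rewrite sqrtr_sqr ger0_norm; last exact: mulr_ge0 (ltW dv0) cx.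
  move: (cos x) => y; ring.
- lra.
- move=> x y xI yI xy.
  rewrite /F !fctE /cst ltrD2l ltr_pM2l // ltr_sin //.
- by move=> x _; apply: cF'.
- by apply/cvg_ex; exists (F^`()%classic (- (pi/2))); exact: cvg_at_right_filter (cF' _).
- by apply/cvg_ex; exists (F^`()%classic (pi/2)); exact: cvg_at_left_filter (cF' _).
- split.
  + by move=> x _; case: (dF x).
  + exact: cvg_at_right_filter (cF _).
  + exact: cvg_at_left_filter (cF _).
- apply: continuous_subspaceT => x.
  pose q : R -> R := cst (dv ^+ 2) - (id - cst c) * (id - cst c).
  have dq : derivable q x 1 by [].
  have cq : {for x, continuous q}.
    by apply: differentiable_continuous; apply/derivable1_diffP.
  have -> : G = (cst 2) \* (Num.sqrt \o q).
    apply/funext => y; rewrite /G /q !fctE /cst /=; congr (_ * Num.sqrt _).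
  apply: continuousM; first exact: cst_continuous.
  exact: (continuous_comp cq (@sqrt_continuous _ _)).
Qed.

Lemma xsec_disk (R : realType) (c : R * R) (dv t : R) : 0 < dv ->
  @lebesgue_measure R (xsection (vis_disk c dv) t) =
  (2 * Num.sqrt (dv ^+ 2 - (t - c.1) ^+ 2))%:E.
Proof.
move=> dv0.
set q := dv ^+ 2 - (t - c.1) ^+ 2.
have memE y : (xsection (vis_disk c dv) t) y <-> (y - c.2) ^+ 2 <= q.
  rewrite /xsection /vis_disk /= in_setE /edist /=.
  rewrite -{1}(ger0_norm (ltW dv0)) -sqrtr_sqr ler_sqrt ?sqr_ge0 //.
  have e1 : (c.1 - t) ^+ 2 = (t - c.1) ^+ 2 by ring.
  have e2 : (c.2 - y) ^+ 2 = (y - c.2) ^+ 2 by ring.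
  rewrite /q e1 e2; split => h; lra.
have [q0|q0] := ltP q 0.
  have -> : xsection (vis_disk c dv) t = set0.
    apply/seteqP; split => y //= /memE; have := sqr_ge0 (y - c.2); lra.
  rewrite measure0; congr (_%:E).
  by move/ltW: q0; rewrite -sqrtr_eq0 => /eqP ->; rewrite mulr0.
have -> : xsection (vis_disk c dv) t =
    [set` `[c.2 - Num.sqrt q, c.2 + Num.sqrt q]%R].
  apply/seteqP; split => y /=.
    move/memE; rewrite in_itv /= -ler_sqrt // sqrtr_sqr ler_norml.
    move=> /andP[h1 h2]; apply/andP; split; lra.
  rewrite in_itv /= => /andP[h1 h2]; apply/memE.
  rewrite -ler_sqrt // sqrtr_sqr ler_norml; apply/andP; split; lra.
rewrite lebesgue_measure_itv /= lte_fin.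
have sq0 := sqrtr_ge0 q.
case: ifPn => h.
  rewrite -EFinD; congr (_%:E); ring.
congr (_%:E); move: h; rewrite -leNgt => h.
have -> : Num.sqrt q = 0 by lra.
by rewrite mulr0.
Qed.

Lemma leb2_disk (R : realType) (c : R * R) (dv : R) : 0 < dv ->
  leb2 (vis_disk c dv) = (pi * dv ^+ 2)%:E.
Proof.
move=> dv0; rewrite /leb2 /product_measure1 /=.
transitivity (\int[@lebesgue_measure R]_t (2 * Num.sqrt (dv ^+ 2 - (t - c.1) ^+ 2))%:E)%E.
  by apply: eq_integral => t _; exact: xsec_disk.
rewrite -(@int_semicircle R c.1 dv dv0) [RHS]integral_mkcond; apply: eq_integral => t _.
rewrite patchE; case: ifPn => // /negP.
move=> h; move: h; rewrite in_setE /= in_itv /= => h.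
have h' : dv ^+ 2 - (t - c.1) ^+ 2 <= 0.
  have [h1|h1] := ltP t (c.1 - dv).
    have : 0 < (c.1 - dv - t) * (c.1 + dv - t) by apply: mulr_gt0; lra.
    move=> H; rewrite (_ : dv ^+ 2 - (t - c.1) ^+ 2 = - ((c.1 - dv - t) * (c.1 + dv - t))); [lra|ring].
  have h2 : c.1 + dv < t by apply/negP => /negP; rewrite -leNgt => h2; apply: h; lra.
  have : 0 < (t - c.1 - dv) * (t - c.1 + dv) by apply: mulr_gt0; lra.
  move=> H; rewrite (_ : dv ^+ 2 - (t - c.1) ^+ 2 = - ((t - c.1 - dv) * (t - c.1 + dv))); [lra|ring].
by move: h'; rewrite -sqrtr_eq0 => /eqP ->; rewrite mulr0.
Qed.

Lemma mem_fset_set_sub (T : choiceType) (A : set T) x : x \in fset_set A -> A x.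
Proof.
have [fA|nfA] := pselect (finite_set A).
  by rewrite in_fset_set // in_setE.
by rewrite /fset_set; case: pselect.
Qed.

Lemma size_range (R : realType) (A : set (R * R)) c dv :
  size (range_vec A c dv) = nvis A c dv.
Proof. by rewrite /range_vec /nvis /count_in size_map size_sort. Qed.

Lemma range_bound (R : realType) (A : set (R * R)) c dv r :
  r \in range_vec A c dv -> 0 <= r <= dv.
Proof.
case/mapP => p; rewrite mem_sort => /mem_fset_set_sub [_ pD] ->.
by rewrite sqrtr_ge0 pD.
Qed.

Lemma Delta_fin (R : realType) (u v : seq R) (dv : R) : 0 <= dv ->
  (forall r, r \in u -> 0 <= r <= dv) -> (forall r, r \in v -> 0 <= r <= dv) ->
  size u = size v -> exists2 M, M <= dv & Delta_p u v = M%:E.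
Proof.
move=> dv0 hu hv suv; rewrite /Delta_p suv eqxx.
eexists; last reflexivity.
rewrite big_seq; apply: (big_ind (fun x => x <= dv)) => //.
  by move=> x y hx hy; rewrite ge_max hx hy.
case=> a b /= hab.
have /hu ha : a \in u.
  by have := map_f fst hab; rewrite -/(unzip1 _) unzip1_zip ?suv.
have /hv hb : b \in v.
  by have := map_f snd hab; rewrite -/(unzip2 _) unzip2_zip ?suv.
rewrite ler_norml; apply/andP; split; lra.
Qed.

Lemma event_eq (R : realType) (A B : set (R * R)) (c1 c2 : R * R) (dv eps : R) :
  0 < dv -> dv <= eps ->
  (eps%:E < Delta_p (range_vec A c1 dv) (range_vec B c2 dv))%E <->
  nvis A c1 dv <> nvis B c2 dv.
Proof.
move=> dv0 de; split.
  move=> h heq.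
  have [M Mle DM] := @Delta_fin R _ _ dv (ltW dv0) (@range_bound R A c1 dv)
     (@range_bound R B c2 dv) (etrans (size_range _ _ _ _) (etrans heq (esym (size_range _ _ _ _)))).
  move: h; rewrite DM lte_fin; lra.
move=> hne; rewrite /Delta_p !size_range.
by move/eqP/negbTE: hne => ->; exact: ltry.
Qed.

Lemma eseries_EFin (R : realType) (u : nat -> R) : cvgn (series u) ->
  (\sum_(0 <= k <oo) (u k)%:E)%E = (limn (series u))%:E.
Proof.
move=> cu; rewrite -EFin_lim //; congr (limn _); apply/funext => n /=.
by rewrite sumEFin.
Qed.

Lemma bessel_series (R : realType) (m : R) : 0 <= m ->
  (\sum_(0 <= k <oo) ((poisson_mass m k) ^+ 2)%:E)%E =
  (expR (- (2 * m)) * besselI0 (2 * m))%:E.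
Proof.
move=> m0.
have m2 : 2 * m / 2 = m by field.
rewrite /besselI0 m2.
pose b k := m ^+ (2 * k) / (k`!%:R) ^+ 2.
have fact1 k : 1 <= (k`!%:R : R) by rewrite ler1n fact_gt0.
have b0 k : 0 <= b k.
  by rewrite /b mulr_ge0 ?invr_ge0 ?exprn_ge0 // ler0n.
have cb : cvgn (series b).
  apply: (@series_le_cvg _ b (exp_coeff (m ^+ 2))) => //.
  - by move=> n; rewrite /exp_coeff /= mulr_ge0 ?invr_ge0 ?exprn_ge0 ?sqr_ge0 // ler0n.
  - move=> n; rewrite /b /exp_coeff /= exprM expr2 invfM mulrA.
    rewrite ler_piMr ?invf_le1 ?mulr_ge0 ?invr_ge0 ?exprn_ge0 ?sqr_ge0 ?ler0n //.
  - exact: is_cvg_series_exp_coeff.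
transitivity (\sum_(0 <= k <oo) ((expR (- (2 * m)))%:E * (b k)%:E))%E.
  apply: eq_eseriesr => k _; rewrite -EFinM; congr (_%:E).
  rewrite /poisson_mass /b (_ : - (2 * m) = - m + - m); last by ring.
  rewrite expRD exprM [m ^+ 2 ^+ k]exprAC.
  have := fact1 k; move: (m ^+ k) (k`!%:R) (expR (- m)) => y z e z1.
  have z0 : z != 0 by apply/lt0r_neq0/(lt_le_trans ltr01).
  by field.
transitivity ((expR (- (2 * m)))%:E * \sum_(0 <= k <oo) (b k)%:E)%E.
  by apply: nneseriesZl => i _; rewrite lee_fin.
by rewrite eseries_EFin // -EFinM.
Qed.

Lemma disk_sq {R : realType} (c p : R * R) (dv : R) : 0 < dv ->
  vis_disk c dv p <-> (c.1 - p.1) ^+ 2 + (c.2 - p.2) ^+ 2 <= dv ^+ 2.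
Proof.
move=> dv0; rewrite /vis_disk /edist /=.
by rewrite -{1}(ger0_norm (ltW dv0)) -sqrtr_sqr ler_sqrt ?sqr_ge0.
Qed.

Lemma disk_meas (R : realType) (c : R * R) (dv : R) : 0 < dv ->
  measurable (vis_disk c dv).
Proof.
move=> dv0.
have -> : vis_disk c dv =
    (fun p : R * R => (c.1 - p.1) ^+ 2 + (c.2 - p.2) ^+ 2) @^-1` `]-oo, dv ^+ 2].
  apply/seteqP; split => p /=; rewrite in_itv /=.
    by move/(disk_sq c p dv dv0).
  by move=> h; apply/(disk_sq c p dv dv0).
rewrite -[X in measurable X]setTI.
apply: (_ : measurable_fun setT _) => //.
apply: measurable_realfun.measurable_funD.
  apply: measurable_realfun.measurable_funX.
  apply: measurable_realfun.measurable_funB => //; exact: measurable_fst.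
apply: measurable_realfun.measurable_funX.
apply: measurable_realfun.measurable_funB => //; exact: measurable_snd.
Qed.

Lemma disk_bounded (R : realType) (c : R * R) (dv : R) : 0 < dv ->
  bounded2 (vis_disk c dv).
Proof.
move=> dv0; exists (`|c.1| + `|c.2| + dv) => p /(disk_sq c p dv dv0) h.
have h1 : `|c.1 - p.1| <= dv.
  rewrite -(ger0_norm (ltW dv0)) -!sqrtr_sqr ler_sqrt ?sqr_ge0 //.
  by have := sqr_ge0 (c.2 - p.2); lra.
have h2 : `|c.2 - p.2| <= dv.
  rewrite -(ger0_norm (ltW dv0)) -!sqrtr_sqr ler_sqrt ?sqr_ge0 //.
  by have := sqr_ge0 (c.1 - p.1); lra.
move: h1 h2; rewrite !ler_norml => /andP[a1 a2] /andP[b1 b2].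
have := ler_norm c.1; have := ler_norm c.2.
have := normr_ge0 c.1; have := normr_ge0 c.2.
have n1 : - c.1 <= `|c.1| by rewrite -normrN ler_norm.
have n2 : - c.2 <= `|c.2| by rewrite -normrN ler_norm.
split; rewrite ler_norml; apply/andP; split; lra.
Qed.


Theorem corollary1 (R : realType) (d : measure_display) (T : measurableType d)
  (P : probability T R) (lam dv eps : R) (x : R * R)
  (Phi0 Phix : T -> set (R * R)) :
  0 < lam -> 0 < dv -> dv <= eps ->
  homogeneous_PPP P lam Phi0 -> homogeneous_PPP P lam Phix ->
  independent_pp P Phi0 Phix ->
  let m := lam * pi * dv ^+ 2 in
  P [set w | (eps%:E < Delta_p (range_vec (Phi0 w) (0%R, 0%R) dv)
                               (range_vec (Phix w) x dv))%E]
    = P [set w | nvis (Phi0 w) (0%R, 0%R) dv <> nvis (Phix w) x dv] /\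
  P [set w | nvis (Phi0 w) (0%R, 0%R) dv <> nvis (Phix w) x dv]
    = (1 - expR (- (2 * m)) * besselI0 (2 * m))%:E.
Proof.
move=> lam0 dv0 de PPP0 PPPx ind m.
split.
  congr (P _); apply/seteqP; split => w /=.
    by move/(@event_eq R _ _ _ _ dv eps dv0 de).
  by move/(@event_eq R _ _ _ _ dv eps dv0 de).
have mD (c : R * R) : measurable (vis_disk c dv) /\ bounded2 (vis_disk c dv).
  by split; [exact: disk_meas | exact: disk_bounded].
have lebD (c : R * R) : fine (leb2 (vis_disk c dv)) = pi * dv ^+ 2.
  by rewrite leb2_disk.
pose E (Phi : T -> set (R * R)) (c : R * R) (k : nat) :=
  [set w | count_in (Phi w) (vis_disk c dv) = k].
have cE Phi c k : count_event Phi (fun _ : 'I_1 => vis_disk c dv) (fun _ => k) = E Phi c k.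
  by rewrite /count_event bigcap_const //; exists ord0.
have mE Phi c k : homogeneous_PPP P lam Phi -> measurable (E Phi c k).
  by case=> _ [H _]; apply: H; case: (mD c).
have PE Phi c k : homogeneous_PPP P lam Phi -> P (E Phi c k) = (poisson_mass m k)%:E.
  case=> _ [_ H].
  have := H 1%N (fun _ => vis_disk c dv) (fun _ => k) (fun _ => mD c).
  rewrite cE big_ord1 lebD /m mulrA => ->//.
  by move=> i j; rewrite (ord1 i) (ord1 j) eqxx.
pose F k := E Phi0 (0, 0) k `&` E Phix x k.
have PF k : P (F k) = ((poisson_mass m k) ^+ 2)%:E.
  have := ind 1%N 1%N (fun _ => vis_disk (0, 0) dv) (fun _ => k)
    (fun _ => vis_disk x dv) (fun _ => k) (fun _ => mD _) (fun _ => mD _).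
  by rewrite !cE => ->; rewrite !PE // -EFinM expr2.
have mF k : measurable (F k) by apply: measurableI; apply: mE.
have tF : trivIset setT F.
  move=> i j _ _ [w [[/= h1 _] [/= h2 _]]].
  by rewrite -h1 -h2.
have eqU : [set w | nvis (Phi0 w) (0%R, 0%R) dv = nvis (Phix w) x dv] =
    \bigcup_k F k.
  apply/seteqP; split => w /=.
    by move=> h; exists (nvis (Phi0 w) (0%R, 0%R) dv) => //; split => //=.
  by case=> k _ [/= h1 h2]; rewrite /nvis h1 h2.
have hC : [set w | nvis (Phi0 w) (0%R, 0%R) dv <> nvis (Phix w) x dv] =
    ~` [set w | nvis (Phi0 w) (0%R, 0%R) dv = nvis (Phix w) x dv].
  by apply/seteqP; split => w /=.
have mU : measurable (\bigcup_k F k) by apply: bigcup_measurable => k _.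
rewrite hC probability_setC; last by rewrite eqU.
rewrite eqU -(cvg_lim _ (@measure_sigma_additive _ _ _ P F mF tF)) //.
have -> : (fun n => \sum_(0 <= i < n) P (F i))%E =
    (fun n => \sum_(0 <= i < n) ((poisson_mass m i) ^+ 2)%:E)%E.
  by apply/funext => n; apply: eq_bigr => i _; rewrite PF.
have m0 : 0 <= m by rewrite /m !mulr_ge0 ?sqr_ge0 ?pi_ge0 ?ltW.
by rewrite (@bessel_series R m m0) -EFinB.
Qed.
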